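(* Let $G$ be a finite simple graph without isolated vertices. If $G$ has no critical vertices, then $G$ has a perfect 2-matching.
   Context: A vertex is critical if deleting it strictly decreases the stability number $\alpha(G)$ (the maximum size of a set of pairwise non-adjacent vertices); equivalently, it belongs to every maximum stable set. A perfect 2-matching of a graph is an assignment of weights in $\{0,1/2,1\}$ to its edges such that the total weight of edges at each vertex is at most 1 and every vertex is incident to some edge of nonzero weight; equivalently, a family of vertex-disjoint edges and odd cycles covering all vertices. *)

(* Defs.v *)
From mathcomp Require Import all_boot all_order all_algebra.
Set Implicit Arguments. Unset Strict Implicit. Unset Printing Implicit Defensive.
Import GRing.Theory Num.Theory.

Definition simple_graph (T : finType) (e : rel T) : Prop :=
  symmetric e /\ irreflexive e.

Definition no_isolated (T : finType) (e : rel T) : Prop :=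
  forall v : T, exists u : T, e v u.

Definition stable (T : finType) (e : rel T) (S : {set T}) : bool :=
  [forall x in S, forall y in S, ~~ e x y].

Definition alpha_on (T : finType) (e : rel T) (V : {set T}) : nat :=
  \max_(S : {set T} | (S \subset V) && stable e S) #|S|.

Definition alpha (T : finType) (e : rel T) : nat := alpha_on e [set: T].

Definition critical (T : finType) (e : rel T) (v : T) : Prop :=
  alpha_on e [set~ v] < alpha e.

Definition perfect_2_matching (T : finType) (e : rel T) (w : T -> T -> rat) : Prop :=
  [/\ forall x y, w x y = w y x,
      forall x y, ~~ e x y -> w x y = 0%R,
      forall x y, w x y \in [:: 0%R; (1/2)%R; 1%R],
      forall x, (\sum_(y : T) w x y <= 1)%R
    & forall x, exists y, e x y /\ w x y != 0%R].

Definition has_perfect_2_matching (T : finType) (e : rel T) : Prop :=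
  exists w : T -> T -> rat, perfect_2_matching e w.

(* Main.v *)
Require Import Defs.
From mathcomp Require Import all_boot all_order all_algebra.
From mathcomp Require Import zify.
Import GRing.Theory Num.Theory.
Set Implicit Arguments. Unset Strict Implicit. Unset Printing Implicit Defensive.

Definition NB (T : finType) (r : rel T) (S : {set T}) : {set T} :=
  [set y | [exists x in S, r x y]].

Lemma NBP (T : finType) (r : rel T) (S : {set T}) y :
  reflect (exists2 x, x \in S & r x y) (y \in NB r S).
Proof.
rewrite inE; apply: (iffP existsP) => [[x /andP [xS rxy]]|[x xS rxy]].
  by exists x.
by exists x; rewrite xS.
Qed.

Lemma NB_mem (T : finType) (r : rel T) (S : {set T}) x y : x \in S -> r x y -> y \in NB r S.
Proof. by move=> xS rxy; apply/NBP; exists x. Qed.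

Lemma NB_sub (T : finType) (r : rel T) (S S' : {set T}) : S \subset S' -> NB r S \subset NB r S'.
Proof.
move=> sS; apply/subsetP => y /NBP [x xS rxy]; apply: (NB_mem _ rxy).
exact: (subsetP sS).
Qed.

Lemma stableP (T : finType) (e : rel T) (S : {set T}) :
  reflect (forall x y, x \in S -> y \in S -> ~~ e x y) (stable e S).
Proof.
apply: (iffP forall_inP) => [h x y xS yS | h x xS].
  by move/forall_inP: (h x xS); apply.
by apply/forall_inP => y yS; exact: h.
Qed.

Lemma stableE (T : finType) (e : rel T) (S : {set T}) x y :
  stable e S -> x \in S -> y \in S -> ~~ e x y.
Proof. by move/stableP; apply. Qed.

Lemma hall (T : finType) (r : rel T) n : forall D R : {set T}, #|D| <= n ->
  (forall S : {set T}, S \subset D -> #|S| <= #|R :&: NB r S|) ->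
  exists f : T -> T, {in D &, injective f} /\
    (forall x, x \in D -> (f x \in R) && r x (f x)).
Proof.
elim: n => [|n IH] D R hD hc.
  have -> : D = set0 by apply/cards0_eq; lia.
  by exists id; split => [x y|x]; rewrite inE.
case: (set_0Vmem D) => [->|[x0 x0D]].
  by exists id; split => [x y|x]; rewrite inE.
case: (boolP [exists S0 : {set T},
   [&& S0 \proper D, S0 != set0 & #|R :&: NB r S0| <= #|S0|]]).
- case/existsP => S0 /and3P [pS0 nS0 tS0].
  have sS0 : S0 \subset D := proper_sub pS0.
  have cS0 : #|S0| < #|D| := proper_card pS0.
  have [f1 [inj1 h1]] := IH S0 R (ltac:(lia)) (fun S sS => hc S (subset_trans sS sS0)).
  have cD2 : #|D :\: S0| <= n.
    rewrite cardsD (setIidPr sS0).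
    move: nS0; rewrite -card_gt0 => nS0; lia.
  have hc2 : forall S : {set T}, S \subset D :\: S0 -> #|S| <= #|(R :\: NB r S0) :&: NB r S|.
    move=> S sS.
    have sSD : S \subset D by apply: subset_trans sS (subsetDl _ _).
    have dis : S :&: S0 = set0.
      apply/setP => z; rewrite !inE; apply/negP => /andP [zS zS0].
      by move: (subsetP sS z zS); rewrite inE zS0.
    have := hc (S :|: S0) (ltac:(by rewrite subUset sSD sS0)).
    rewrite cardsU dis cards0 subn0.
    have sub : R :&: NB r (S :|: S0) \subset
               ((R :\: NB r S0) :&: NB r S) :|: (R :&: NB r S0).
      apply/subsetP => y; rewrite in_setI => /andP [yR /NBP [x]].
      rewrite in_setU => /orP [xS|xS0] rxy; rewrite in_setU !in_setI in_setD yR /=.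
        case: (boolP (y \in NB r S0)) => yN; first by rewrite orbT.
        by rewrite (NB_mem xS rxy).
      by rewrite (NB_mem xS0 rxy) orbT.
    have := subset_leq_card sub; rewrite cardsU.
    lia.
  have [f2 [inj2 h2]] := IH (D :\: S0) (R :\: NB r S0) cD2 hc2.
  exists (fun x => if x \in S0 then f1 x else f2 x); split.
    move=> x y xD yD /=.
    case: (boolP (x \in S0)) => xS0; case: (boolP (y \in S0)) => yS0.
    + exact: inj1.
    + move=> fxy; have /andP [_ ] := h1 x xS0.
      have /andP [] := h2 y (ltac:(by rewrite inE yS0 yD)).
      rewrite inE -fxy => /andP [/negP H _] _ rx; case: H.
      exact: NB_mem xS0 rx.
    + move=> fxy; have /andP [_ ] := h1 y yS0.
      have /andP [] := h2 x (ltac:(by rewrite inE xS0 xD)).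
      rewrite inE fxy => /andP [/negP H _] _ ry; case: H.
      exact: NB_mem yS0 ry.
    + apply: inj2; by rewrite inE ?xS0 ?yS0 ?xD ?yD.
  move=> x xD; case: (boolP (x \in S0)) => xS0; first exact: h1.
  have /andP [] := h2 x (ltac:(by rewrite inE xS0 xD)).
  by rewrite inE => /andP [_ ->] ->.
- move=> /existsPn hn.
  have : 0 < #|R :&: NB r [set x0]|.
    have := hc [set x0] (ltac:(by rewrite sub1set)); rewrite cards1; lia.
  rewrite card_gt0 => /set0Pn [y0]; rewrite inE => /andP [y0R /NBP [x']].
  rewrite inE => /eqP -> rxy0.
  have cD : #|D :\ x0| <= n by move: hD; rewrite (cardsD1 x0) x0D; lia.
  have hc' : forall S : {set T}, S \subset D :\ x0 -> #|S| <= #|(R :\ y0) :&: NB r S|.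
    move=> S sS.
    case: (set_0Vmem S) => [->|[z zS]]; first by rewrite cards0.
    have pS : S \proper D.
      apply/properP; split.
        by apply: subset_trans sS (subsetDl _ _).
      exists x0 => //; apply/negP => x0S.
      by move: (subsetP sS x0 x0S); rewrite !inE eqxx.
    have := hn S; rewrite pS /=.
    have -> : S != set0 by apply/set0Pn; exists z.
    rewrite /= -ltnNge => lt.
    have sub : R :&: NB r S \subset y0 |: ((R :\ y0) :&: NB r S).
      apply/subsetP => y; rewrite !inE => /andP [yR yN].
      by case: (y == y0); rewrite //= yR yN.
    have := subset_leq_card sub; rewrite cardsU1; lia.
  have [f' [inj' h']] := IH (D :\ x0) (R :\ y0) cD hc'.
  exists (fun z => if z == x0 then y0 else f' z); split.
    move=> x y xD yD /=.
    case: (boolP (x == x0)) => [/eqP ->|nx]; case: (boolP (y == x0)) => [/eqP ->|ny] //.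
    + have /andP [] := h' y (ltac:(by rewrite in_setD1 ny yD)).
      by rewrite !inE => /andP [/eqP H _] _ E; case: H.
    + have /andP [] := h' x (ltac:(by rewrite in_setD1 nx xD)).
      by rewrite !inE => /andP [/eqP H _] _ E; case: H.
    + apply: inj'; by rewrite in_setD1 ?nx ?ny ?xD ?yD.
  move=> x xD; case: (boolP (x == x0)) => [/eqP ->|nx]; first by rewrite y0R rxy0.
  have /andP [] := h' x (ltac:(by rewrite in_setD1 nx xD)).
  by rewrite inE => /andP [_ ->] ->.
Qed.

Theorem corollary1 (T : finType) (e : rel T) :
  simple_graph e -> no_isolated e ->
  (forall v : T, ~ critical e v) ->
  has_perfect_2_matching e.
Proof.
move=> [esy eirr] _ hnc.
have hall_cond : forall S : {set T}, #|S| <= #|NB e S|.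
  move=> S; rewrite leqNgt; apply/negP => hS.
  set S' := S :\: NB e S.
  have stS' : stable e S'.
    apply/stableP => x y; rewrite !in_setD => /andP [_ xS] /andP [/negP H _].
    apply/negP => exy; apply: H; exact: NB_mem xS exy.
  have hS' : #|NB e S'| < #|S'|.
    have sub : NB e S' \subset NB e S :\: S.
      apply/subsetP => y /NBP [x]; rewrite inE => /andP [xN xS] exy.
      rewrite inE (NB_mem xS exy) andbT; apply/negP => yS.
      by move/negP: xN; apply; apply: (NB_mem yS); rewrite esy.
    have := subset_leq_card sub; rewrite /S' !cardsD.
    have := subset_leq_card (subsetIl (NB e S) S).
    have -> : S :&: NB e S = NB e S :&: S by rewrite setIC.
    lia.
  pose P (I : {set T}) := stable e I && (#|NB e I| < #|I|).
  have PS' : P S' by rewrite /P stS' hS'.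
  case: (arg_minnP (fun I : {set T} => #|I|) PS') => I /andP [stI hI] Imin.
  have : 0 < #|I| by lia.
  rewrite card_gt0 => /set0Pn [v vI].
  apply: (hnc v); rewrite /critical /alpha /alpha_on.
  set Y := \max_(S : {set T} | (S \subset [set: T]) && stable e S) #|S|.
  have Ypos : 0 < Y.
    apply: leq_trans (leq_bigmax_cond I _); first lia.
    by rewrite subsetT stI.
  suff : \max_(S : {set T} | (S \subset [set~ v]) && stable e S) #|S| <= Y.-1 by lia.
  apply/bigmax_leqP => M /andP [sM stM].
  suff : #|M| < Y by lia.
  have vM : v \notin M.
    by apply/negP => vM; move: (subsetP sM v vM); rewrite !inE eqxx.
  set M' := (M :\: NB e I) :|: I.
  have stM' : stable e M'.
    apply/stableP => x y; rewrite !in_setU !in_setD => /orP [/andP [xN xM]|xI] /orP [/andP [yN yM]|yI].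
    + exact: (stableE stM).
    + apply/negP => exy; move/negP: xN; apply; apply: (NB_mem yI); by rewrite esy.
    + apply/negP => exy; move/negP: yN; apply; exact: (NB_mem xI).
    + exact: (stableE stI).
  suff : #|M| < #|M'|.
    move=> lt; apply: leq_trans lt _; apply: leq_bigmax_cond.
    by rewrite subsetT stM'.
  set K := I :&: M.
  set J := I :\: M.
  have c1 : #|M :\: NB e I| + #|J| <= #|M'|.
    have dis : (M :\: NB e I) :&: J = set0.
      apply/setP => z; rewrite !inE; apply/negP => /andP [/andP [_ zM] /andP [zM' _]].
      by rewrite zM in zM'.
    have sub : (M :\: NB e I) :|: J \subset M'.
      by apply/subsetP => z; rewrite !inE => /orP [->|/andP [_ ->]]; rewrite ?orbT.
    have := subset_leq_card sub; rewrite cardsU dis cards0; lia.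
  have c2 := cardsD M (NB e I).
  have c2' := subset_leq_card (subsetIl M (NB e I)).
  have sKI : K \subset I by apply: subsetIl.
  have c3 : #|M :&: NB e I| <= #|NB e I| - #|NB e K|.
    have sub : M :&: NB e I \subset NB e I :\: NB e K.
      apply/subsetP => y; rewrite in_setI in_setD => /andP [yM yN]; rewrite yN andbT.
      apply/negP => /NBP [x]; rewrite inE => /andP [_ xM] exy.
      by move: (stableE stM xM yM); rewrite exy.
    have := subset_leq_card sub; rewrite cardsD (setIidPr (@NB_sub _ e _ _ sKI)).
    by [].
  have c3' := subset_leq_card (@NB_sub _ e _ _ sKI).
  have c4 : #|K| <= #|NB e K|.
    rewrite leqNgt; apply/negP => lt.
    have PK : P K.
      rewrite /P lt andbT; apply/stableP => x y xK yK.
      exact: (stableE stI (subsetP sKI x xK) (subsetP sKI y yK)).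
    have := Imin K PK.
    have : #|K| < #|I|.
      apply: proper_card; apply/properP; split => //.
      by exists v => //; rewrite inE (negbTE vM) andbF.
    lia.
  have c5 : #|K| + #|J| = #|I| := cardsID M I.
  lia.
have [f [finj fe]] := @hall T e #|T| [set: T] [set: T] (max_card _)
  (fun S _ => ltac:(rewrite setTI; exact: hall_cond S)).
have finj' : injective f by move=> x y; apply: finj; rewrite inE.
have fe' x : e x (f x) by case/andP: (fe x (in_setT x)).
have [g fg gf] := injF_bij finj'.
exists (fun x y => ((f x == y)%:R + (f y == x)%:R) / 2 : rat)%R.
split.
- by move=> x y; rewrite addrC.
- move=> x y nexy.
  have h1 : (f x == y) = false.
    apply/negbTE; apply: contraNneq nexy => <-; exact: fe'.
  have h2 : (f y == x) = false.
    apply/negbTE; apply: contraNneq nexy => <-; rewrite esy; exact: fe'.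
  by rewrite h1 h2.
- by move=> x y; case: (f x == y); case: (f y == x).
- move=> x; rewrite -mulr_suml big_split /=.
  rewrite (bigD1 (f x)) //= eqxx big1 => [|y ny]; last by rewrite eq_sym (negbTE ny).
  rewrite (bigD1 (g x)) // gf eqxx big1 => [|y ny].
    rewrite /= !addr0.
    have -> : (1 + 1 : rat)%R = 2%:R%R by [].
    by rewrite divff.
  case: eqP => // fyx; move: ny; by rewrite -fyx fg eqxx.
- move=> x; exists (f x); split; first exact: fe'.
  by rewrite eqxx -natrD mulf_neq0 ?invr_eq0 ?pnatr_eq0.
Qed.
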